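(* The number $K_T$ of episodes of \texttt{UCMNLK} over $T$ steps satisfies $K_T\le1+d\log_2(1+2TL_\varphi^2/\lambda)$.
   Context: \texttt{UCMNLK} maintains $\Sigma_1=\lambda I_d$ ($\lambda>0$) and $\Sigma_{t+1}=\Sigma_t+\nabla^2\ell_t(\widehat\theta_{t+1})$, where $\ell_t(\theta)=-\sum_{s'\in\mathcal S_t}y_{t,s'}\log p_{t,s'}(\theta)$ is the multinomial log-loss at step $t$ with Hessian $\nabla^2\ell_t(\theta)=\sum_{s'}p_{t,s'}(\theta)\varphi_{t,s'}\varphi_{t,s'}^\top-\sum_{s',s''}p_{t,s'}(\theta)p_{t,s''}(\theta)\varphi_{t,s'}\varphi_{t,s''}^\top$, $p_{t,\cdot}(\theta)$ a probability vector on the finite set $\mathcal S_t$, and $\|\varphi_{t,s'}\|_2\le L_\varphi$. A new episode starts at time $t$ (and $t_{k+1}=t$) as soon as $\det\Sigma_t>2\det\Sigma_{t_k}$, where $t_k$ is the start of the current episode. *)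

(* Defs.v *)
From HB Require Import structures.
From mathcomp Require Import all_boot all_order all_algebra.
From mathcomp Require Import all_classical all_reals all_analysis.
Set Implicit Arguments. Unset Strict Implicit. Unset Printing Implicit Defensive.
Import Order.TTheory GRing.Theory Num.Theory.
Local Open Scope ring_scope.

Definition norm2 {R : realType} {d : nat} (v : 'cV[R]_d) : R :=
  Num.sqrt (\sum_(i < d) (v i 0) ^+ 2).

Definition log2 {R : realType} (x : R) : R := ln x / ln 2.

(* Hessian of the multinomial log-loss on a finite set 'I_m, given the
   probability vector p (evaluated at the relevant parameter) and features phi:
   sum_s p_s phi_s phi_s^T - sum_{s,s'} p_s p_s' phi_s phi_s'^T *)
Definition mnl_hessian {R : realType} {d m : nat}
  (p : 'I_m -> R) (phi : 'I_m -> 'cV[R]_d) : 'M[R]_d :=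
  \sum_(s < m) p s *: (phi s *m (phi s)^T)
  - \sum_(s < m) \sum_(s' < m) (p s * p s') *: (phi s *m (phi s')^T).

(* Sigma_t = lambda I + sum_{1 <= s < t} H_s, so Sigma_1 = lambda I and
   Sigma_{t+1} = Sigma_t + H_t. *)
Definition Sigma {R : realType} {d : nat} (lam : R) (H : nat -> 'M[R]_d)
  (t : nat) : 'M[R]_d :=
  lam%:M + \sum_(1 <= s < t) H s.

(* episode_state n = (start of current episode, number of episodes so far)
   at time t = n+1. Time 1 starts episode 1; at time t >= 2 a new episode
   starts iff det Sigma_t > 2 det Sigma_{t_k}. *)
Fixpoint episode_state {R : realType} {d : nat} (lam : R)
  (H : nat -> 'M[R]_d) (n : nat) : nat * nat :=
  match n with
  | 0 => (1%N, 1%N)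
  | n'.+1 =>
      let: (s, k) := episode_state lam H n' in
      if 2 * \det (Sigma lam H s) < \det (Sigma lam H n'.+2)
      then (n'.+2, k.+1) else (s, k)
  end.

Definition num_episodes {R : realType} {d : nat} (lam : R)
  (H : nat -> 'M[R]_d) (T : nat) : nat :=
  (episode_state lam H T.-1).2.

(* Main.v *)
Require Import Defs.
From HB Require Import structures.
From mathcomp Require Import all_boot all_order all_algebra.
From mathcomp Require Import all_classical all_reals all_analysis.
From mathcomp Require Import ring lra zify.
Set Implicit Arguments. Unset Strict Implicit. Unset Printing Implicit Defensive.
Import Order.TTheory GRing.Theory Num.Theory.
Local Open Scope ring_scope.
Section Had.
Variable R : realFieldType.

Definition qf n (A : 'M[R]_n) (x : 'cV[R]_n) : R :=
  \sum_i \sum_j x i 0 * A i j * x j 0.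

Definition posdef n (A : 'M[R]_n) := forall x : 'cV[R]_n, x != 0 -> 0 < qf A x.

Lemma qf_delta n (A : 'M[R]_n) i : qf A (delta_mx i 0) = A i i.
Proof.
rewrite /qf (bigD1 i) //= [X in _ + X]big1 => [|k kni]; last first.
  by apply: big1 => j _; rewrite !mxE (negbTE kni) /= !mul0r.
rewrite addr0 (bigD1 i) //= [X in _ + X]big1 => [|k kni]; last by rewrite !mxE (negbTE kni) /= mulr0.
by rewrite !mxE !eqxx /= mul1r mulr1 !addr0.
Qed.

Lemma delta_neq0 n (i : 'I_n) : delta_mx i 0 != 0 :> 'cV[R]_n.
Proof.
apply/negP => /eqP/matrixP/(_ i 0); rewrite !mxE !eqxx /= => /eqP.
by rewrite oner_eq0.
Qed.

Lemma posdef_diag n (A : 'M[R]_n) i : posdef A -> 0 < A i i.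
Proof. by move=> P; rewrite -qf_delta; apply: P; apply: delta_neq0. Qed.

Lemma qf_recl n (A : 'M[R]_n.+1) z : qf A z =
  z 0 0 * A 0 0 * z 0 0 + \sum_j z 0 0 * A 0 (lift 0 j) * z (lift 0 j) 0
  + \sum_i z (lift 0 i) 0 * A (lift 0 i) 0 * z 0 0
  + \sum_i \sum_j z (lift 0 i) 0 * A (lift 0 i) (lift 0 j) * z (lift 0 j) 0.
Proof.
rewrite /qf big_ord_recl big_ord_recl.
under [X in _ + X]eq_bigr do rewrite big_ord_recl.
by rewrite big_split /= !addrA.
Qed.

Lemma hadamard n (A : 'M[R]_n) :
  (forall i j, A i j = A j i) -> posdef A -> \det A <= \prod_i A i i.
Proof.
elim: n A => [|n IH] A Asym Apd.
  by rewrite det_mx00 big_ord0.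
set a := A 0 0.
have a_gt0 : 0 < a by apply: posdef_diag.
pose F := \matrix_(i, k) (((k == 0) && (i != 0))%:R * (A i 0 / a)) : 'M[R]_n.+1.
pose E := 1%:M - F.
pose S := \matrix_(i < n, j < n)
   (A (lift 0 i) (lift 0 j) - A (lift 0 i) 0 * A 0 (lift 0 j) / a).
have detE : \det E = 1.
  rewrite det_trig.
    rewrite big1 // => i _; rewrite !mxE eqxx /=.
    by case: (i == 0) => /=; rewrite ?andbF ?andbT ?mul0r ?subr0 //= mul1r subrr.
  apply/forallP => i; apply/forallP => j; apply/implyP => ij.
  rewrite !mxE.
  have -> : (i == j) = false by apply/negbTE; rewrite neq_ltn ij.
  have -> : (j == 0) = false by apply/negbTE; rewrite -lt0n; apply: leq_ltn_trans ij.
  by rewrite /= mul0r subr0.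
have EA : forall i j, (E *m A) i j = A i j - (i != 0)%:R * (A i 0 / a) * A 0 j.
  move=> i j; rewrite mulmxBl mul1mx !mxE; congr (_ - _).
  rewrite (bigD1 0) //= big1 => [|k kn0]; last by rewrite !mxE (negbTE kn0) /= !mul0r.
  by rewrite !mxE eqxx /= addr0.
have detA : \det A = a * \det S.
  rewrite -[\det A]mul1r -detE -det_mulmx (expand_det_col _ 0) big_ord_recl.
  rewrite big1 => [|i _]; last first.
    by rewrite EA [lift _ _ == 0]eq_sym neq_lift /= mul1r -/a divfK ?subrr ?mul0r // gt_eqF.
  rewrite addr0 EA eqxx /= !mul0r subr0 /cofactor /= expr0 mul1r; congr (_ * \det _).
  apply/matrixP => i j; rewrite [LHS]mxE [LHS]mxE EA mxE [lift _ _ == 0]eq_sym neq_lift /= mul1r.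

  by rewrite mulrAC.
have Ssym : forall i j, S i j = S j i.
  move=> i j; rewrite !mxE (Asym (lift 0 i) (lift 0 j)) (Asym (lift 0 i) 0) (Asym (lift 0 j) 0).
  by rewrite [_ * A 0 (lift 0 i)]mulrC.
have Spd : posdef S.
  move=> x xn0.
  pose g := \sum_j A 0 (lift 0 j) * x j 0.
  pose w := - g / a.
  pose z := \col_i (oapp (fun k => x k 0) w (unlift 0 i)) : 'cV[R]_n.+1.
  have zE0 : z 0 0 = w by rewrite mxE unlift_none.
  have zEl : forall k, z (lift 0 k) 0 = x k 0 by move=> k; rewrite mxE liftK.
  have zn0 : z != 0.
    apply: contra xn0 => /eqP zE; apply/eqP/matrixP => i j; rewrite (ord1 j) mxE.
    by rewrite -zEl zE mxE.
  have := Apd z zn0; congr (0 < _).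
  rewrite qf_recl !zE0.
  under eq_bigr do rewrite zEl.
  under [X in _ + X + _ = _]eq_bigr do rewrite zEl.
  under [X in _ + X = _]eq_bigr do under eq_bigr do rewrite !zEl.
  have h1 : \sum_i w * A 0 (lift 0 i) * x i 0 = w * g.
    by rewrite /g big_distrr /=; apply: eq_bigr => i _; rewrite mulrA.
  have h2 : \sum_i x i 0 * A (lift 0 i) 0 * w = g * w.
    by rewrite /g big_distrl; apply: eq_bigr => i _ /=; rewrite (Asym _ 0) [x i 0 * _]mulrC.
  have h3 : qf S x = \sum_i \sum_j x i 0 * A (lift 0 i) (lift 0 j) * x j 0 - g * (g / a).
    rewrite /qf {1}/g big_distrl /= -sumrB; apply: eq_bigr => i _.
    rewrite /g big_distrl big_distrr /= -sumrB; apply: eq_bigr => j _.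
    rewrite mxE (Asym _ 0); ring.
  rewrite h1 h2 h3 -/a /w; field.
  by rewrite gt_eqF.
rewrite detA big_ord_recl -/a ler_pM2l //.
apply: le_trans (IH S Ssym Spd) _; apply: ler_prod => i _.
rewrite (ltW (posdef_diag i Spd)) /= mxE (Asym _ 0) gerBl.
by rewrite -expr2 divr_ge0 ?sqr_ge0 // ltW.
Qed.


Lemma qfD n (A B : 'M[R]_n) x : qf (A + B) x = qf A x + qf B x.
Proof.
rewrite /qf -big_split; apply: eq_bigr => i _; rewrite -big_split.
by apply: eq_bigr => j _; rewrite mxE mulrDr mulrDl.
Qed.

Lemma qf0 n (x : 'cV[R]_n) : qf 0 x = 0.
Proof. by rewrite /qf big1 // => i _; rewrite big1 // => j _; rewrite mxE mulr0 mul0r. Qed.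

Lemma qfN n (A : 'M[R]_n) x : qf (- A) x = - qf A x.
Proof.
rewrite /qf -sumrN; apply: eq_bigr => i _; rewrite -sumrN.
by apply: eq_bigr => j _; rewrite mxE mulrN mulNr.
Qed.

Lemma qfB n (A B : 'M[R]_n) x : qf (A - B) x = qf A x - qf B x.
Proof. by rewrite qfD qfN. Qed.

Lemma qfZ n (k : R) (A : 'M[R]_n) x : qf (k *: A) x = k * qf A x.
Proof.
rewrite /qf big_distrr; apply: eq_bigr => i _; rewrite big_distrr.
by apply: eq_bigr => j _ /=; rewrite mxE; ring.
Qed.

Lemma qf_sum n I (r : seq I) (P : pred I) (F : I -> 'M[R]_n) x :
  qf (\sum_(i <- r | P i) F i) x = \sum_(i <- r | P i) qf (F i) x.
Proof. exact: (big_morph (fun A : 'M[R]_n => qf A x) (fun A B => qfD A B x) (qf0 x)). Qed.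

Lemma qf_scalar n (a : R) (x : 'cV[R]_n) : qf a%:M x = a * \sum_i x i 0 ^+ 2.
Proof.
rewrite /qf big_distrr; apply: eq_bigr => i _ /=.
rewrite (bigD1 i) //= big1 => [|j ji]; last by rewrite mxE eq_sym (negbTE ji) mulr0n mulr0 mul0r.
by rewrite mxE eqxx mulr1n addr0 expr2; ring.
Qed.

Lemma qf_outer n (u v x : 'cV[R]_n) :
  qf (u *m v^T) x = (\sum_i x i 0 * u i 0) * (\sum_j v j 0 * x j 0).
Proof.
rewrite /qf big_distrl; apply: eq_bigr => i _ /=; rewrite big_distrr.
apply: eq_bigr => j _ /=; rewrite !mxE big_ord1 !mxE; ring.
Qed.

Lemma sumsq_gt0 n (x : 'cV[R]_n) : x != 0 -> 0 < \sum_i x i 0 ^+ 2.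
Proof.
move=> xn0.
have [k xk] : exists k, x k 0 != 0.
  apply/existsP; apply: contraR xn0; rewrite negb_exists => /forallP H.
  by apply/eqP/matrixP => i j; rewrite (ord1 j) mxE; apply/eqP; have := H i; rewrite negbK.
rewrite (bigD1 k) //=.
have h1 : 0 < x k 0 ^+ 2 by rewrite exprn_even_gt0.
have h2 : 0 <= \sum_(i | i != k) x i 0 ^+ 2 by apply: sumr_ge0 => i _; apply: sqr_ge0.
lra.
Qed.


Lemma var_ge0 m (p y : 'I_m -> R) : (forall s, 0 <= p s) -> \sum_s p s = 1 ->
  \sum_s \sum_s' (p s * p s') * (y s * y s') <= \sum_s p s * (y s * y s).
Proof.
move=> p0 p1.
set mu := \sum_s p s * y s.
have E1 : \sum_s \sum_s' (p s * p s') * (y s * y s') = mu * mu.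
  rewrite /mu big_distrl; apply: eq_bigr => s _ /=; rewrite big_distrr.
  by apply: eq_bigr => t _ /=; ring.
have E2 : \sum_s p s * (y s - mu) ^+ 2 = \sum_s p s * (y s * y s) - mu * mu.
  have -> : \sum_s p s * (y s - mu) ^+ 2 =
     \sum_s (p s * (y s * y s) - (2 * mu) * (p s * y s) + (mu * mu) * p s).
    by apply: eq_bigr => s _; ring.
  rewrite big_split sumrB /= -!big_distrr /= p1 -/mu; ring.
have E3 : 0 <= \sum_s p s * (y s - mu) ^+ 2.
  by apply: sumr_ge0 => s _; apply: mulr_ge0 => //; apply: sqr_ge0.
lra.
Qed.

End Had.

Set Implicit Arguments.
Section Hess.
Variables (R : realType) (d m : nat) (p : 'I_m -> R) (phi : 'I_m -> 'cV[R]_d).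

Lemma hessE i j : mnl_hessian p phi i j =
  \sum_s p s * (phi s i 0 * phi s j 0)
  - \sum_s \sum_s' (p s * p s') * (phi s i 0 * phi s' j 0).
Proof.
rewrite /mnl_hessian !mxE !summxE; congr (_ - _).
  by apply: eq_bigr => s _; rewrite !mxE big_ord1 !mxE.
apply: eq_bigr => s _; rewrite summxE; apply: eq_bigr => t _.
by rewrite !mxE big_ord1 !mxE.
Qed.

Lemma hess_sym i j : mnl_hessian p phi i j = mnl_hessian p phi j i.
Proof.
rewrite !hessE; congr (_ - _).
  by apply: eq_bigr => s _; rewrite mulrC [phi s i 0 * _]mulrC mulrC.
rewrite exchange_big; apply: eq_bigr => s _; apply: eq_bigr => t _ /=.
by rewrite [p t * _]mulrC [phi t i 0 * _]mulrC.
Qed.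

Hypothesis p0 : forall s, 0 <= p s.
Hypothesis p1 : \sum_s p s = 1.

Lemma hess_qf x : 0 <= qf (mnl_hessian p phi) x.
Proof.
rewrite /mnl_hessian qfB !qf_sum subr_ge0.
pose y s := \sum_i x i 0 * phi s i 0.
have yE : forall s, \sum_j phi s j 0 * x j 0 = y s.
  by move=> s; apply: eq_bigr => j _; rewrite mulrC.
have := var_ge0 y p0 p1; congr (_ <= _).
  apply: eq_bigr => s _; rewrite qf_sum; apply: eq_bigr => t _.
  by rewrite qfZ qf_outer yE.
by apply: eq_bigr => s _; rewrite qfZ qf_outer yE.
Qed.

Lemma hess_diag_le i : mnl_hessian p phi i i <= \sum_s p s * phi s i 0 ^+ 2.
Proof.
rewrite hessE gerBl.
have -> : \sum_s \sum_s' (p s * p s') * (phi s i 0 * phi s' i 0)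
   = (\sum_s p s * phi s i 0) ^+ 2.
  rewrite expr2 big_distrl; apply: eq_bigr => s _ /=; rewrite big_distrr.
  by apply: eq_bigr => t _ /=; ring.
by rewrite sqr_ge0.
Qed.

Lemma hess_tr L : (forall s, norm2 (phi s) <= L) ->
  \sum_i mnl_hessian p phi i i <= L ^+ 2.
Proof.
move=> hL.
apply: le_trans (ler_sum _ (fun i _ => hess_diag_le i)) _.
rewrite exchange_big /=.
have -> : L ^+ 2 = \sum_s p s * L ^+ 2 by rewrite -big_distrl /= p1 mul1r.
apply: ler_sum => s _; rewrite -big_distrr /=; apply: ler_wpM2l => //.
have n0 : 0 <= norm2 (phi s) by rewrite /norm2 sqrtr_ge0.
have := hL s; rewrite /norm2 => h.
rewrite -(@sqr_sqrtr _ (\sum_i phi s i 0 ^+ 2)); last by apply: sumr_ge0 => i _; apply: sqr_ge0.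
by rewrite lerXn2r // nnegrE ?sqrtr_ge0 //; apply: le_trans h.
Qed.

End Hess.

Section Ep.
Variables (R : realType) (d : nat) (lam : R) (H : nat -> 'M[R]_d).
Hypothesis lam0 : 0 < lam.

Lemma ep_inv n : let e := episode_state lam H n in
  [/\ (1 <= e.1 <= n.+1)%N, (0 < e.2)%N &
      2 ^+ e.2.-1 * lam ^+ d <= \det (Sigma lam H e.1)].
Proof.
elim: n => [|n IH] /=.
  by rewrite /Sigma big_geq // addr0 det_scalar expr0 mul1r.
move: IH; case: (episode_state lam H n) => s k /= [hs hk hdet].
case: ifP => hlt /=.
  split => //.
  rewrite -(prednK hk) exprS -mulrA.
  apply: le_trans (ltW hlt); rewrite ler_pM2l //; by rewrite prednK.
split => //; case/andP: hs => -> /= hs; exact: leq_trans hs _.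
Qed.

End Ep.

Unset Implicit Arguments.
Section Sig.
Variables (R : realType) (d : nat) (lam L : R) (T : nat) (m : nat -> nat)
  (p : forall t : nat, 'I_(m t) -> R)
  (phi : forall t : nat, 'I_(m t) -> 'cV[R]_d).
Hypothesis lam0 : 0 < lam.
Hypothesis p0 : forall t (s : 'I_(m t)), 0 <= p t s.
Hypothesis p1 : forall t, \sum_(s < m t) p t s = 1.
Hypothesis hL : forall t (s : 'I_(m t)), norm2 (phi t s) <= L.

Let H := fun t => mnl_hessian (p t) (phi t).

Lemma SigmaE t i j : Sigma lam H t i j = lam *+ (i == j) + \sum_(1 <= s < t) H s i j.
Proof. by rewrite /Sigma !mxE summxE. Qed.

Lemma Sigma_sym t i j : Sigma lam H t i j = Sigma lam H t j i.
Proof.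
rewrite !SigmaE eq_sym; congr (_ + _); apply: eq_bigr => s _; exact: hess_sym.
Qed.

Lemma Sigma_pd t : posdef (Sigma lam H t).
Proof.
move=> x xn0; rewrite /Sigma qfD qf_scalar qf_sum.
have h1 := sumsq_gt0 xn0.
have h2 : 0 <= \sum_(1 <= s < t) qf (H s) x.
  by apply: sumr_ge0 => s _; apply: hess_qf; [exact: p0 | exact: p1].
have h3 := mulr_gt0 lam0 h1.
lra.
Qed.

Lemma Sigma_tr t : \sum_i Sigma lam H t i i <= d%:R * lam + (t.-1)%:R * L ^+ 2.
Proof.
under eq_bigr do rewrite SigmaE eqxx mulr1n.
rewrite big_split /= sumr_const card_ord [d%:R * lam]mulr_natl lerD2l.
rewrite exchange_big /=.
apply: le_trans (ler_sum _ (fun s _ => hess_tr (p0 s) (p1 s) (hL s))) _.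
by rewrite sumr_const_nat subn1 mulr_natl.
Qed.

Lemma det_Sigma_le t : (t.-1 <= T)%N ->
  \det (Sigma lam H t) <= (lam + 2 * T%:R * L ^+ 2) ^+ d.
Proof.
move=> tT.
apply: le_trans (hadamard (Sigma_sym t) (Sigma_pd t)) _.
have := leif_AGM (I := 'I_d) (A := predT) (E := fun i => Sigma lam H t i i).
move=> /= /(_ (fun i _ => ltW (posdef_diag i (Sigma_pd t)))) [hle _].
have cd : #|@predT 'I_d| = d by exact: card_ord.
rewrite cd in hle.
apply: le_trans hle _.
set X := \sum_(i in predT) _.
have hX : X <= d%:R * lam + (t.-1)%:R * L ^+ 2 by exact: (Sigma_tr t).
have X0 : 0 <= X by apply: sumr_ge0 => i _; exact: ltW (posdef_diag i (Sigma_pd t)).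
have L2 : 0 <= L ^+ 2 by apply: sqr_ge0.
have T0 : 0 <= T%:R :> R by apply: ler0n.
have tT' : (t.-1)%:R <= T%:R :> R by rewrite ler_nat.
have M0 : 0 <= lam + 2 * T%:R * L ^+ 2.
  by apply: addr_ge0; [exact: ltW | apply: mulr_ge0 => //; apply: mulr_ge0].
apply: lerXn2r; rewrite ?nnegrE ?divr_ge0 //.
have [d0|dpos] := posnP d.
  by rewrite d0 invr0 mulr0.
rewrite ler_pdivrMr ?ltr0n //.
have d1 : 1 <= d%:R :> R by rewrite ler1n.
have h1 := mulr_ge0 T0 L2.
have h2 : (t.-1)%:R * L ^+ 2 <= T%:R * L ^+ 2 by apply: ler_wpM2r.
have h3 : T%:R * L ^+ 2 <= d%:R * (T%:R * L ^+ 2) by rewrite ler_peMl.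
lra.
Qed.

End Sig.

Unset Implicit Arguments.
Theorem lemma21 (R : realType) (d : nat) (lam L : R) (T : nat)
  (m : nat -> nat)
  (p : forall t : nat, 'I_(m t) -> R)
  (phi : forall t : nat, 'I_(m t) -> 'cV[R]_d) :
  0 < lam ->
  (forall t (s : 'I_(m t)), 0 <= p t s) ->
  (forall t, \sum_(s < m t) p t s = 1) ->
  (forall t (s : 'I_(m t)), norm2 (phi t s) <= L) ->
  (num_episodes lam (fun t => mnl_hessian (p t) (phi t)) T)%:R
    <= 1 + d%:R * log2 (1 + 2 * T%:R * L ^+ 2 / lam).
Proof.
move=> lam0 p0 p1 hL.
rewrite /num_episodes.
have := ep_inv lam (fun t => mnl_hessian (p t) (phi t)) T.-1.
case: (episode_state _ _ _) => s K /= [hs hK hdet].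
have sT : (s.-1 <= T)%N.
  case/andP: hs => _ hs; lia.
have hM := @det_Sigma_le R d lam L T m p phi lam0 p0 p1 hL s sT.
set x := 1 + 2 * T%:R * L ^+ 2 / lam.
have Mx : lam + 2 * T%:R * L ^+ 2 = lam * x by rewrite /x; field; rewrite gt_eqF.
have x0 : 0 < x.
  rewrite /x; apply: (lt_le_trans ltr01); rewrite lerDl; apply: divr_ge0; last exact: ltW.
  by apply: mulr_ge0; [apply: mulr_ge0 | apply: sqr_ge0].
have h2 : 2 ^+ K.-1 <= x ^+ d.
  have := le_trans hdet hM; rewrite Mx exprMn [2 ^+ _ * _]mulrC ler_pM2l //.
  exact: exprn_gt0.
have hln : ln (2 ^+ K.-1) <= ln (x ^+ d :> R).
  by rewrite ler_ln // posrE exprn_gt0.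
rewrite !lnXn // in hln.
have ln2 : 0 < ln (2 : R) by apply: ln_gt0; rewrite ltr1n.
rewrite /log2 -(prednK hK) -add1n natrD lerD2l mulrA ler_pdivlMr //.
by rewrite !mulr_natl.
Qed.
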